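(* Let $0\le\alpha\le1/4$, $\beta=(1-4\alpha)/2$, and let $\mathbf P_\alpha$ be the corner/stick law on $\mathbb Z^2$. If $1/8\le\alpha\le1/4$, then for every $A\subseteq\mathcal N_o$, $$\mathbf P_{1/2}[N(o)\cap A\neq\emptyset]\le \mathbf P_\alpha[N(o)\cap A\neq\emptyset],$$ where $\mathbf P_{1/2}$ is the local i.i.d. law with parameter $1/2$. Consequently $\mathbb P_{1/2}[o\rightsquigarrow\partial B_n]\le\mathbb P_\alpha[o\rightsquigarrow\partial B_n]$ for all $n$.
   Context: On $\mathbb Z^2$, $\mathcal N_o=\{\text{north},\text{south},\text{east},\text{west}\}$ (the four unit vectors). The corner/stick law $\mathbf P_\alpha$ is the law of a random 2-element subset $N(o)\subseteq\mathcal N_o$ that equals each of the four ''corner'' pairs $\{$north,east$\}$, $\{$north,west$\}$, $\{$south,east$\}$, $\{$south,west$\}$ with probability $\alpha$ and each of the two ''stick'' pairs $\{$north,south$\}$, $\{$east,west$\}$ with probability $\beta$, where $4\alpha+2\beta=1$. $\mathbf P_{1/2}$: each element of $\mathcal N_o$ is included independently with probability $1/2$. $\mathbb P_\alpha,\mathbb P_{1/2}$ are the product laws on $\mathbb Z^2$ (each vertex $u$ independently samples its translated set $N(u)$), defining a directed graph with edges $(u,v)$, $v\in N(u)$; $B_n=\{x:\|x\|_1\le n\}$, $\partial B_n=B_{n+1}\setminus B_n$, and $\{o\rightsquigarrow\partial B_n\}$ is the event that a directed path from the origin reaches $\partial B_n$. *)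

(* Defs.v *)
From HB Require Import structures.
From mathcomp Require Import all_boot all_order all_algebra.
From mathcomp Require Import boolp reals.
Set Implicit Arguments. Unset Strict Implicit. Unset Printing Implicit Defensive.
Import Order.TTheory GRing.Theory Num.Theory.
Local Open Scope ring_scope.

(** The four unit vectors of Z^2: the set N_o. *)
Inductive dir := North | South | East | West.

Definition dir_to_nat (d : dir) : nat :=
  match d with North => 0 | South => 1 | East => 2 | West => 3 end.
Definition nat_to_dir (n : nat) : option dir :=
  match n with 0 => Some North | 1 => Some South | 2 => Some East
             | 3 => Some West | _ => None end.
Lemma dir_natK : pcancel dir_to_nat nat_to_dir. Proof. by case. Qed.
HB.instance Definition _ := Countable.copy dir (pcan_type dir_natK).
Definition dir_enum := [:: North; South; East; West].
Lemma dir_enumP : Finite.axiom dir_enum. Proof. by case. Qed.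
HB.instance Definition _ := isFinite.Build dir dir_enumP.

Definition vtx := (int * int)%type.
Definition origin : vtx := (0, 0).
Definition dvec (d : dir) : vtx :=
  match d with North => (0, 1) | South => (0, -1)
             | East => (1, 0) | West => (-1, 0) end.
Definition vadd (u v : vtx) : vtx := (u.1 + v.1, u.2 + v.2).
Definition l1norm (u : vtx) : int := `|u.1| + `|u.2|.

Definition inB (n : nat) (x : vtx) : bool := l1norm x <= n%:Z.
Definition inDB (n : nat) (x : vtx) : bool := inB n.+1 x && ~~ inB n x.

Definition is_corner (S : {set dir}) : bool :=
  (S == [set North; East]) || (S == [set North; West]) ||
  (S == [set South; East]) || (S == [set South; West]).
Definition is_stick (S : {set dir}) : bool :=
  (S == [set North; South]) || (S == [set East; West]).

Definition beta_of {R : realType} (alpha : R) : R := (1 - 4 * alpha) / 2.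

Definition Pcs {R : realType} (alpha : R) (S : {set dir}) : R :=
  if is_corner S then alpha else if is_stick S then beta_of alpha else 0.

Definition Phalf {R : realType} (S : {set dir}) : R :=
  \prod_(d : dir) (if d \in S then 1 / 2 else 1 - 1 / 2).

Definition local_hit {R : realType} (P : {set dir} -> R) (A : {set dir}) : R :=
  \sum_(S : {set dir} | S :&: A != set0) P S.

(** Finite window: the box [-n,n]^2 (which contains B_n), indexed by
    'I_(2n+1) * 'I_(2n+1). *)
Definition box (n : nat) := ('I_(n.*2.+1) * 'I_(n.*2.+1))%type.
Definition box_pos (n : nat) (b : box n) : vtx :=
  ((b.1 : nat)%:Z - n%:Z, (b.2 : nat)%:Z - n%:Z).

(** A configuration on the box: each vertex u samples N(u) (as a set of
    directions; the actual out-neighbours are u + d, d in the set). *)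
Definition config (n : nat) := {ffun box n -> {set dir}}.

(** The sampled direction set at a vertex of Z^2 (empty outside the box;
    this value is never used by the event below). *)
Definition dirs_at (n : nat) (w : config n) (u : vtx) : {set dir} :=
  if [pick b : box n | box_pos b == u] is Some b then w b else set0.

Definition edge (n : nat) (w : config n) : rel vtx :=
  fun u v => [exists d in dirs_at w u, v == vadd u (dvec d)].

(** {o ~> dB_n}: a directed path from o reaching dB_n.  We describe it by
    its initial segment up to the first visit of dB_n: all earlier vertices
    lie in B_n (so only the configuration on B_n is consulted). *)
Definition reaches (n : nat) (w : config n) : Prop :=
  exists s : seq vtx,
    [/\ path (edge w) origin s,
        all (inB n) (belast origin s) &
        inDB n (last origin s)].

(** Product law restricted to the box (the finite-dimensional marginal of
    the product law on Z^2); it determines the probability of {o ~> dB_n}. *)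
Definition config_weight {R : realType} (P : {set dir} -> R) (n : nat)
  (w : config n) : R := \prod_(b : box n) P (w b).

Definition prob_reach {R : realType} (P : {set dir} -> R) (n : nat) : R :=
  \sum_(w : config n | `[< reaches w >]) config_weight P w.

(* Main.v *)
Require Import Defs.
From HB Require Import structures.
From mathcomp Require Import all_boot all_order all_algebra.
From mathcomp Require Import boolp reals.
From mathcomp Require Import lra zify.
Import Order.TTheory GRing.Theory Num.Theory.
Local Open Scope ring_scope.

Definition toS (t : bool * bool * bool * bool) : {set dir} :=
  [set x | match x with North => t.1.1.1 | South => t.1.1.2 | East => t.1.2 | West => t.2 end].
Definition ofS (S : {set dir}) := (North \in S, South \in S, East \in S, West \in S).
Lemma toSK : cancel toS ofS.
Proof. by case=> [[[a b] c] d]; rewrite /ofS !inE. Qed.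
Lemma ofSK : cancel ofS toS.
Proof. by move=> S; apply/setP; case; rewrite inE. Qed.

Lemma sumS (R : realType) (F : {set dir} -> R) :
  \sum_(S : {set dir}) F S = \sum_(a : bool) \sum_(b : bool) \sum_(c : bool) \sum_(d : bool) F (toS (a,b,c,d)).
Proof.
rewrite (reindex toS); last by exists ofS => x _; [apply: toSK| apply: ofSK].
symmetry; rewrite pair_bigA pair_bigA pair_bigA; apply: eq_bigr => -[[[a b] c] d] _ //.
Qed.

Lemma toS_inj : injective toS. Proof. exact: can_inj toSK. Qed.

Lemma toS_meet a b c d a' b' c' d' :
  (toS (a,b,c,d) :&: toS (a',b',c',d') != set0) = [|| a && a', b && b', c && c' | d && d'].
Proof.
apply/set0Pn/idP => [[x]|].
  by rewrite !inE; case: x => /andP[] /= -> ->; rewrite ?orbT.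
case/or4P => /andP[h1 h2]; [exists North|exists South|exists East|exists West];
  by rewrite !inE /= h1 h2.
Qed.

Lemma Pcs_toS (R : realType) (al : R) t :
  Pcs al (toS t) =
  if t \in [:: (true,false,true,false); (true,false,false,true); (false,true,true,false); (false,true,false,true)]
  then al else if t \in [:: (true,true,false,false); (false,false,true,true)] then beta_of al else 0.
Proof.
have E : forall u, (toS t == toS u) = (t == u) by move=> u; rewrite (inj_eq toS_inj).
rewrite /Pcs /is_corner /is_stick.
have -> : [set North; East] = toS (true,false,true,false) by apply/setP; case; rewrite !inE.
have -> : [set North; West] = toS (true,false,false,true) by apply/setP; case; rewrite !inE.
have -> : [set South; East] = toS (false,true,true,false) by apply/setP; case; rewrite !inE.
have -> : [set South; West] = toS (false,true,false,true) by apply/setP; case; rewrite !inE.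
have -> : [set North; South] = toS (true,true,false,false) by apply/setP; case; rewrite !inE.
have -> : [set East; West] = toS (false,false,true,true) by apply/setP; case; rewrite !inE.
by rewrite !E !inE !orbA.
Qed.

Lemma Phalf_const (R : realType) S : Phalf S = (1/16 : R).
Proof.
rewrite /Phalf (eq_bigr (fun=> (1/2 : R))); last by move=> d _; case: ifP => _; lra.
rewrite prodr_const.
have -> : #|{: dir}| = 4%N by rewrite cardT enumT unlock.
lra.
Qed.

Lemma part1 (R : realType) (al : R) : 1/8 <= al -> al <= 1/4 ->
  forall A, local_hit Phalf A <= local_hit (Pcs al) A.
Proof.
move=> h1 h2 A; rewrite /local_hit big_mkcond [X in _ <= X]big_mkcond /= !sumS.
rewrite -(ofSK A); case: (ofS A) => [[[a b] c] d].
rewrite !big_bool !toS_meet !Phalf_const !Pcs_toS /beta_of.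
case: a; case: b; case: c; case: d => /=; lra.
Qed.

Lemma sum_Phalf (R : realType) : \sum_S (Phalf S : R) = 1.
Proof. rewrite sumS !big_bool !Phalf_const /=; lra. Qed.

Lemma sum_Pcs (R : realType) (al : R) : \sum_S Pcs al S = 1.
Proof. rewrite sumS !big_bool !Pcs_toS /= /beta_of; lra. Qed.

Definition Rr (n : nat) (r : rel vtx) (x : vtx) : Prop :=
  exists s, [/\ path r x s, all (inB n) (belast x s) & inDB n (last x s)].

Lemma Rr_sub n (r r' : rel vtx) x : subrel r r' -> Rr n r x -> Rr n r' x.
Proof. by move=> sr [s [h1 h2 h3]]; exists s; split => //; exact: sub_path h1. Qed.

Definition eM (p : vtx) (e : rel vtx) (M : {set dir}) : rel vtx :=
  fun u v => if u == p then [exists d in M, v == vadd p (dvec d)] else e u v.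

Lemma eM_mono p e (M M' : {set dir}) : M \subset M' -> subrel (eM p e M) (eM p e M').
Proof.
move=> sM u v; rewrite /eM; case: ifP => // _ /existsP[d /andP[dM h]].
by apply/existsP; exists d; rewrite (subsetP sM) // h.
Qed.

Lemma key n p e N : forall s x, path (eM p e N) x s -> all (inB n) (belast x s) ->
  inDB n (last x s) ->
  Rr n (eM p e set0) x \/
  exists2 d, d \in N & (Rr n (eM p e [set d]) p /\
    exists t, [/\ path (eM p e set0) x t, last x t = p & all (inB n) (belast x t)]).
Proof.
elim=> [|y s IH] x /=.
  by move=> _ _ h; left; exists [::].
move=> /andP[hxy hp] /andP[hx hb] hl.
case: (IH y hp hb hl) => [[s' [h1 h2 h3]] | [d dN [hR [t [t1 t2 t3]]]]].
- move: hxy; rewrite {1}/eM; case: eqP => [xp | xp] hxy.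
  + right; case/existsP: hxy => d /andP[dN /eqP yd]; exists d => //; split; last first.
      by exists [::]; split => //=.
    exists (y :: s'); split => /=.
    * rewrite (sub_path (@eM_mono p e set0 [set d] (sub0set _)) h1) andbT /eM eqxx; apply/existsP; exists d; rewrite inE eqxx /= yd //.
    * by rewrite -xp hx.
    * by [].
  + left; exists (y :: s'); split => /=; last by [].
    * by rewrite h1 andbT /eM; case: eqP.
    * by rewrite hx.
- move: hxy; rewrite {1}/eM; case: eqP => [xp | xp] hxy.
  + right; exists d => //; split => //; exists [::]; split => //=.
  + right; exists d => //; split => //; exists (y :: t); split => /=.
    * by rewrite t1 andbT /eM; case: eqP.
    * by [].
    * by rewrite hx.
Qed.

Lemma key2 n p e N x : Rr n (eM p e N) x ->
  Rr n (eM p e set0) x \/ exists2 d, d \in N & Rr n (eM p e [set d]) x.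
Proof.
case=> s [h1 h2 h3].
case: (@key n p e N s x h1 h2 h3) => [|[d dN [[s2 [g1 g2 g3]] [t [t1 t2 t3]]]]]; first by left.
right; exists d => //; exists (t ++ s2); split.
- by rewrite cat_path (sub_path (@eM_mono p e _ _ (sub0set [set d])) t1) t2 g1.
- by rewrite belast_cat all_cat t3 t2 g2.
- by rewrite last_cat t2 g3.
Qed.

Lemma charac n p e x : (forall N, Rr n (eM p e N) x) \/
  exists A : {set dir}, forall N, Rr n (eM p e N) x <-> N :&: A != set0.
Proof.
case: (pselect (Rr n (eM p e set0) x)) => h0.
  by left => N; exact: Rr_sub (@eM_mono p e _ _ (sub0set N)) h0.
right; exists [set d | `[< Rr n (eM p e [set d]) x >]] => N; split.
- case/key2 => // -[d dN hd]; apply/set0Pn; exists d; rewrite !inE dN /=; exact/asboolP.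
- case/set0Pn => d; rewrite !inE => /andP[dN /asboolP hd].
  by apply: Rr_sub hd; apply: eM_mono; rewrite sub1set.
Qed.

Definition upd n (w : config n) (b : box n) (N : {set dir}) : config n :=
  [ffun c => if c == b then N else w c].
Arguments upd {n}.

Lemma box_pos_inj n : injective (@box_pos n).
Proof.
move=> [x1 x2] [y1 y2] [h1 h2].
have e1 : (x1 : nat) = y1 by lia.
have e2 : (x2 : nat) = y2 by lia.
by congr pair; apply: val_inj.
Qed.

Lemma dirs_at_upd n (w : config n) b N u :
  dirs_at (upd w b N) u = if u == box_pos b then N else dirs_at w u.
Proof.
rewrite /dirs_at; case: pickP => [c /eqP Hc|H0].
  rewrite ffunE; case: (c =P b) => [eb|ncb]; first by subst c; rewrite -Hc eqxx.
  by rewrite -Hc; case: eqP => // /box_pos_inj.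
case: eqP => // Hu; have := H0 b; by rewrite Hu eqxx.
Qed.

Lemma reaches_upd n (w : config n) b N :
  reaches (upd w b N) <-> Rr n (eM (box_pos b) (edge w) N) origin.
Proof.
have E : edge (upd w b N) =2 eM (box_pos b) (edge w) N.
  by move=> u v; rewrite /edge dirs_at_upd /eM; case: eqP => [->|].
by split => -[s [h1 h2 h3]]; exists s; split => //; [rewrite -(eq_path E) | rewrite (eq_path E)].
Qed.

Definition G (R : realType) n (L : box n -> {set dir} -> R) :=
  \sum_(w : config n | `[< reaches w >]) \prod_(c : box n) L c (w c).
Arguments G {R n}.

Lemma upd_upd n (w : config n) b N M : upd (upd w b N) b M = upd w b M.
Proof. by apply/ffunP => c; rewrite !ffunE; case: eqP. Qed.

Lemma upd0E n (w : config n) b : (upd w b set0 == w) = (w b == set0).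
Proof.
apply/eqP/eqP => [<-|h]; first by rewrite ffunE eqxx.
by apply/ffunP => c; rewrite ffunE; case: eqP => // ->.
Qed.

Lemma decomp (R : realType) n (L : box n -> {set dir} -> R) b :
  G L = \sum_(w : config n | w b == set0)
          (\prod_(c | c != b) L c (w c)) * \sum_(N | `[< reaches (upd w b N) >]) L b N.
Proof.
rewrite /G big_mkcond (partition_big (fun w : config n => w b) predT) //=.
transitivity (\sum_(N : {set dir}) \sum_(w : config n | w b == set0)
   (if `[< reaches (upd w b N) >] then \prod_c L c (upd w b N c) else 0)).
  apply: eq_bigr => N _.
  rewrite (reindex_onto (fun w => upd w b N) (fun w => upd w b set0)).
    by apply: eq_bigl => w; rewrite /= ffunE !eqxx /= upd_upd upd0E.
  move=> w /eqP wb; apply/ffunP => c; rewrite !ffunE; case: eqP => // ->; by rewrite wb.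
rewrite exchange_big; apply: eq_bigr => w wb.
rewrite [X in _ = _ * X]big_mkcond mulr_sumr; apply: eq_bigr => N _.
case: asboolP => _; last by rewrite mulr0.
rewrite (bigD1 b) //= ffunE eqxx mulrC; congr (_ * _).
by apply: eq_bigr => c cb; rewrite ffunE (negbTE cb).
Qed.

Lemma local_cmp (R : realType) n (w : config n) b (P Q : {set dir} -> R) :
  \sum_S P S = 1 -> \sum_S Q S = 1 -> (forall A, local_hit P A <= local_hit Q A) ->
  \sum_(N | `[< reaches (upd w b N) >]) P N <= \sum_(N | `[< reaches (upd w b N) >]) Q N.
Proof.
move=> sP sQ hPQ.
case: (@charac n (box_pos b) (edge w) origin) => [hall|[A hA]].
  have E : forall F : {set dir} -> R, \sum_(N | `[< reaches (upd w b N) >]) F N = \sum_N F N.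
    move=> F; apply: eq_bigl => N; apply/asboolP; exact/reaches_upd.
  by rewrite !E sP sQ.
have E : forall F : {set dir} -> R, \sum_(N | `[< reaches (upd w b N) >]) F N = local_hit F A.
  move=> F; apply: eq_bigl => N; apply/asboolP/idP => h.
    by apply/hA/reaches_upd.
  by apply/reaches_upd/hA.
by rewrite !E.
Qed.

Lemma step (R : realType) n (P Q : {set dir} -> R) (L1 L2 : box n -> {set dir} -> R) b :
  \sum_S P S = 1 -> \sum_S Q S = 1 -> (forall A, local_hit P A <= local_hit Q A) ->
  (forall c, c != b -> L1 c = L2 c) -> L1 b = P -> L2 b = Q ->
  (forall c S, 0 <= L1 c S) -> G L1 <= G L2.
Proof.
move=> sP sQ hPQ e12 e1 e2 pos.
rewrite (@decomp R n L1 b) (@decomp R n L2 b); apply: ler_sum => w _.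
have -> : \prod_(c | c != b) L2 c (w c) = \prod_(c | c != b) L1 c (w c).
  by apply: eq_bigr => c cb; rewrite e12.
apply: ler_wpM2l; first by apply: prodr_ge0 => c _.
by rewrite e1 e2; apply: local_cmp.
Qed.

Lemma hybrid (R : realType) n (P Q : {set dir} -> R) :
  (forall S, 0 <= P S) -> (forall S, 0 <= Q S) ->
  \sum_S P S = 1 -> \sum_S Q S = 1 -> (forall A, local_hit P A <= local_hit Q A) ->
  prob_reach P n <= prob_reach Q n.
Proof.
move=> pP pQ sP sQ hPQ.
pose mix (X : {set box n}) : box n -> {set dir} -> R := fun c => if c \in X then Q else P.
have claim : forall k (X : {set box n}), #|X| = k -> G (mix set0) <= G (mix X).
  elim=> [|k IH] X hX; first by rewrite (cards0_eq hX).
  have : X != set0 by rewrite -card_gt0 hX.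
  case/set0Pn => b bX.
  have hY : #|X :\ b| = k by move: hX; rewrite (cardsD1 b) bX add1n => -[].
  apply: le_trans (IH _ hY) _.
  apply: (@step R n P Q _ _ b sP sQ hPQ).
  - by move=> c cb; rewrite /mix in_setD1 cb.
  - by rewrite /mix in_setD1 eqxx.
  - by rewrite /mix bX.
  - by move=> c S; rewrite /mix; case: ifP.
have e0 : G (mix set0) = prob_reach P n.
  by apply: eq_bigr => w _; apply: eq_bigr => c _; rewrite /mix inE.
have eT : G (mix setT) = prob_reach Q n.
  by apply: eq_bigr => w _; apply: eq_bigr => c _; rewrite /mix inE.
by rewrite -e0 -eT; apply: (claim _ setT).
Qed.

Theorem mainTheorem14 (R : realType) (alpha : R) :
  1 / 8 <= alpha -> alpha <= 1 / 4 ->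
  (forall A : {set dir}, local_hit Phalf A <= local_hit (Pcs alpha) A) /\
  (forall n : nat, prob_reach Phalf n <= prob_reach (Pcs alpha) n).
Proof.
move=> h1 h2; split; first exact: part1.
move=> n; apply: hybrid.
- by move=> S; rewrite Phalf_const; lra.
- move=> S; rewrite /Pcs /beta_of; case: ifP => _; first lra.
  case: ifP => _; lra.
- exact: sum_Phalf.
- exact: sum_Pcs.
- exact: part1.
Qed.
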